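(* Let $D$ be a normal binary delta-matroid whose intersection graph $G_D$ is the complete simple graph $K_v$ on $v\ge1$ vertices (no loops). Then ${}^{\partial}w_{D}(z)=2^{v}z^{v-1}$ if $v$ is odd, and ${}^{\partial}w_{D}(z)=2^{v-1}z^{v}+2^{v-1}z^{v-2}$ if $v$ is even.
   Context: A delta-matroid is a set system $(E,\mathcal{F})$, $\mathcal{F}\ne\emptyset$ a family of subsets of finite $E$, satisfying: for all $X,Y\in\mathcal{F}$ and $u\in X\Delta Y$ there is $v\in X\Delta Y$ with $X\Delta\{u,v\}\in\mathcal{F}$. Twist: $D*A=(E,\{A\Delta X:X\in\mathcal{F}\})$. Width $w(D)$ = maximum minus minimum cardinality of feasible sets; twist polynomial ${}^{\partial}w_{D}(z)=\sum_{A\subseteq E}z^{w(D*A)}$. $D$ is normal if $\emptyset\in\mathcal{F}$. For a symmetric matrix $C$ over $GF(2)$ indexed by $E$, $D(C)=(E,\{A\subseteq E: C[A]\text{ nonsingular}\})$ ($C[A]$ principal submatrix, $C[\emptyset]$ nonsingular by convention). $D$ is binary if some twist of it is isomorphic to some $D(C)$. A normal binary $D$ equals $D(C)$ for a unique symmetric $C$; its intersection graph $G_D$ has vertex set $E$, distinct $u,v$ adjacent iff $C_{u,v}=1$, and a loop at $v$ iff $C_{v,v}=1$. *)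

(* Defs.v *)
From HB Require Import structures.
From mathcomp Require Import all_boot all_order all_algebra.
Set Implicit Arguments. Unset Strict Implicit. Unset Printing Implicit Defensive.
Import GRing.Theory.
Local Open Scope ring_scope.

Definition is_delta_matroid (E : finType) (F : {set {set E}}) : Prop :=
  F != set0 /\
  forall X Y, X \in F -> Y \in F -> forall u, u \in (X :\: Y) :|: (Y :\: X) ->
    exists2 v, v \in (X :\: Y) :|: (Y :\: X) &
      (X :\: [set u; v]) :|: ([set u; v] :\: X) \in F.

Definition symdiff (E : finType) (A X : {set E}) : {set E} :=
  (A :\: X) :|: (X :\: A).

Definition twist (E : finType) (F : {set {set E}}) (A : {set E}) : {set {set E}} :=
  [set symdiff A X | X in F].

Definition width (E : finType) (F : {set {set E}}) : nat :=
  ((\max_(X in F) #|X|) - \big[minn/#|E|]_(X in F) #|X|)%N.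

Definition twist_poly (E : finType) (F : {set {set E}}) : {poly int} :=
  \sum_(A : {set E}) 'X^(width (twist F A)).

Definition is_normal (E : finType) (F : {set {set E}}) : Prop := set0 \in F.

Definition symmetric_mx (E : finType) (C : E -> E -> 'F_2) : Prop :=
  forall u v, C u v = C v u.

Definition principal_submx (E : finType) (C : E -> E -> 'F_2) (A : {set E})
  : 'M['F_2]_#|A| :=
  \matrix_(i, j) C (enum_val i) (enum_val j).

(* D(C): feasible sets are the A with C[A] nonsingular (det of the empty
   matrix is 1, so the empty set is feasible) *)
Definition DC (E : finType) (C : E -> E -> 'F_2) : {set {set E}} :=
  [set A : {set E} | \det (principal_submx C A) != 0].

(* binary: some twist is isomorphic to some D(C), C symmetric over GF(2).
   The isomorphism is a bijection of ground sets; the matrix is transported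
   to the ground set E. *)
Definition is_binary (E : finType) (F : {set {set E}}) : Prop :=
  exists (A : {set E}) (C : E -> E -> 'F_2) (f : E -> E),
    symmetric_mx C /\ bijective f /\ twist F A = [set (f @: X) | X : {set E} in DC C].

(* For a normal binary D, C is the (unique) symmetric matrix with D = D(C);
   its intersection graph has u~v (u<>v) iff C u v = 1, loop at v iff C v v = 1.
   G_D = K_v (simple, no loops) means that this matrix has 0 on the diagonal
   and 1 off the diagonal. *)
Definition complete_adj_mx (E : finType) : E -> E -> 'F_2 :=
  fun u v => if u == v then 0 else 1.

Definition intersection_graph_is_complete (E : finType) (F : {set {set E}}) : Prop :=
  exists C : E -> E -> 'F_2,
    symmetric_mx C /\ F = DC C /\ (forall u v, C u v = complete_adj_mx u v).

(* Main.v *)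
Require Import Defs.
From mathcomp Require Import all_boot all_order all_algebra.
Import GRing.Theory.
Local Open Scope ring_scope.

Lemma F2nat (m : nat) : (m%:R : 'F_2) = (odd m)%:R.
Proof.
elim: m => [|m IH] //; rewrite -[m.+1]/(1 + m)%N natrD IH /=.
case: (odd m) => /=; [by apply: val_inj | by rewrite addr0].

Qed.

Definition JI (n : nat) : 'M['F_2]_n := \matrix_(i, j) (if i == j then 0 else 1).

Lemma sum_ind (I : finType) (P : pred I) :
  \sum_(i : I) ((P i)%:R : 'F_2) = (odd #|P|)%:R.
Proof.
rewrite -natr_sum -F2nat -sum1_card [in RHS]big_mkcond /=.
by congr (_%:R); apply: eq_bigr => i _; rewrite unfold_in; case: (P i).
Qed.

Lemma det_JI (n : nat) : (\det (JI n) != 0) = ~~ odd n.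
Proof.
case: n => [|n]; first by rewrite det_mx00 oner_eq0.
case Ho: (odd n.+1) => /=.
- apply/negbTE; rewrite negbK; apply/det0P; exists (const_mx 1).
    by apply/eqP => /matrixP /(_ ord0 ord0); rewrite !mxE => /eqP; rewrite oner_eq0.
  apply/matrixP => i j; rewrite !mxE.
  transitivity (\sum_(k : 'I_n.+1) (((k != j) : bool)%:R : 'F_2)).
    by apply: eq_bigr => k _; rewrite !mxE mul1r; case: (k == j).
  rewrite sum_ind.
  have -> : #|(fun k : 'I_n.+1 => k != j)| = #|[set~ j]|.
    by apply: eq_card => k; rewrite in_setC1.
  rewrite cardsC1 card_ord /=.
  by move/negbTE: Ho => ->.
- have HM : JI n.+1 *m JI n.+1 = 1%:M.
    apply/matrixP => r c; rewrite !mxE.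
    transitivity (\sum_(k : 'I_n.+1) ((((r != k) && (k != c)) : bool)%:R : 'F_2)).
      by apply: eq_bigr => k _; rewrite !mxE; case: (r == k); case: (k == c); rewrite ?mulr0 ?mul0r ?mulr1.
    rewrite sum_ind.
    case: (eqVneq r c) => [<-|Hij].
      have -> : #|(fun k : 'I_n.+1 => (r != k) && (k != r))| = #|[set~ r]|.
        by apply: eq_card => k; rewrite in_setC1 -topredE /= [r == k]eq_sym andbb.
      by rewrite cardsC1 card_ord /=; move/negbFE: Ho => ->.
    have -> : #|(fun k : 'I_n.+1 => (r != k) && (k != c))| = #|[set~ r] :\ c|.
      by apply: eq_card => k; rewrite !inE -topredE /= eq_sym andbC.
    have H := cardsD1 c [set~ r]; rewrite cardsC1 card_ord in_setC1 eq_sym Hij /= in H.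
    have : odd (1 + #|[set~ r] :\ c|) by rewrite -H; move/negbFE: Ho.
    by rewrite add1n /= => /negbTE ->.
  apply/negP => /eqP H0.
  have := congr1 determinant HM; rewrite det_mulmx H0 mul0r det1 => /eqP.
  by rewrite eq_sym oner_eq0.
Qed.

Lemma odd_symdiff (E : finType) (A X : {set E}) :
  odd #|symdiff A X| = odd #|A| (+) odd #|X|.
Proof.
rewrite /symdiff cardsU.
have -> : (A :\: X) :&: (X :\: A) = set0.
  by apply/setP => x; rewrite !inE; case: (x \in A); case: (x \in X).
rewrite cards0 subn0 -(cardsID X A) -(cardsID A X) setIC !oddD.
by case: (odd _); case: (odd _); case: (odd _).
Qed.

Lemma symdiffK (E : finType) (A Y : {set E}) : symdiff A (symdiff A Y) = Y.
Proof.
by apply/setP => x; rewrite /symdiff !inE; case: (x \in A); case: (x \in Y).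
Qed.

Lemma twist_even (E : finType) (A : {set E}) :
  twist [set X : {set E} | ~~ odd #|X|] A = [set Y : {set E} | odd #|Y| == odd #|A|].
Proof.
apply/setP => Y; rewrite inE; apply/imsetP/idP.
- by move=> [X]; rewrite inE => /negbTE HX ->; rewrite odd_symdiff HX addbF.
- move=> /eqP HY; exists (symdiff A Y); last by rewrite symdiffK.
  by rewrite inE odd_symdiff HY addbb.
Qed.

Lemma exists_card (E : finType) (n : nat) : (n <= #|E|)%N ->
  exists Y : {set E}, #|Y| = n.
Proof.
move=> Hn; exists [set x in take n (enum E)].
rewrite cardsE; move/card_uniqP: (take_uniq n (enum_uniq E)) => ->.
rewrite size_take -cardE.
by case: (ltnP n #|E|) => H //; apply/eqP; rewrite eqn_leq Hn H.
Qed.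

Lemma width_parity (E : finType) (p : bool) : (1 <= #|E|)%N ->
  width [set Y : {set E} | odd #|Y| == p] = (#|E| - (odd #|E| != p) - p)%N.
Proof.
move=> Hv.
have Hmax : (\max_(X in [set Y : {set E} | odd #|Y| == p]) #|X|)%N = (#|E| - (odd #|E| != p))%N.
  apply/eqP; rewrite eqn_leq; apply/andP; split.
    apply/bigmax_leqP => Y; rewrite inE => /eqP HY.
    have H1 : (#|Y| <= #|E|)%N by apply: max_card.
    case: (eqVneq (odd #|E|) p) => Hp; first by rewrite subn0.
    rewrite subn1 -ltnS (ltn_predK Hv) ltn_neqAle H1 andbT.
    by apply/eqP => HE; move: Hp; rewrite -HE HY eqxx.
  have [Y HY] := exists_card E (#|E| - (odd #|E| != p))%N (leq_subr _ _).
  rewrite -HY; apply: leq_bigmax_cond; rewrite inE HY oddB; last by case: (_ != _).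
  by move: (odd #|E|) => b; case: b; case: p {HY}.
have Hmin : (\big[minn/#|E|]_(X in [set Y : {set E} | odd #|Y| == p]) #|X|)%N = p.
  apply/eqP; rewrite eqn_leq; apply/andP; split.
    have [Y HY] := exists_card E p (leq_trans (leq_b1 p) Hv).
    have HYG : Y \in [set Y : {set E} | odd #|Y| == p] by rewrite inE HY; clear Hmax; case: p {HY}.
    have := @Order.TotalTheory.bigmin_le_cond _ nat _ #|E| Y (fun X => X \in [set Y : {set E} | odd #|Y| == p]) (fun X => #|X|) HYG.
    by rewrite minEnat HY.
  apply: (big_ind (fun x => (p <= x)%N)).
  - exact: leq_trans (leq_b1 p) Hv.
  - by move=> x y Hx Hy; rewrite leq_min Hx Hy.
  - move=> Y; rewrite inE => /eqP HY; clear Hmax; case: p HY => // HY.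
    by case: #|Y| HY.
by rewrite /width Hmax Hmin.
Qed.

Lemma count_odd (E : finType) : (1 <= #|E|)%N ->
  #|[pred A : {set E} | odd #|A|]| = (2 ^ #|E|.-1)%N /\
  #|[pred A : {set E} | ~~ odd #|A|]| = (2 ^ #|E|.-1)%N.
Proof.
move=> Hv; have [x0 _] : exists x0 : E, true.
  by case: (pickP E) => [x|H]; [exists x | move: Hv; rewrite (eq_card0 H)].
set h := fun A : {set E} => symdiff [set x0] A.
have hinj : injective h by move=> A B HAB; rewrite -(symdiffK E [set x0] A) -(symdiffK E [set x0] B) -/(h A) HAB.
have Heq : #|[pred A : {set E} | ~~ odd #|A|]| = #|[pred A : {set E} | odd #|A|]|.
  rewrite -(card_imset _ hinj); apply: eq_card => A; rewrite !inE.
  apply/imsetP/idP.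
  - by move=> [B]; rewrite inE /h => HB ->; rewrite odd_symdiff cards1.
  - move=> HA; exists (h A); last by rewrite /h symdiffK.
    by rewrite inE /h odd_symdiff cards1 HA.
have Htot := cardC [pred A : {set E} | odd #|A|].
rewrite Heq in Htot.
rewrite -cardsT -powersetT card_powerset cardsT in Htot.
case: #|E| Hv Htot => // n _; rewrite expnS /= => Htot.
suff H : #|[pred A : {set E} | odd #|A|]| = (2 ^ n)%N by rewrite Heq H.
by apply/eqP; rewrite -(eqn_pmul2l (isT : (0 < 2)%N)) -Htot mul2n -addnn.
Qed.

Theorem mainTheorem5 (E : finType) (v : nat) (F : {set {set E}}) :
  #|E| = v -> (1 <= v)%N ->
  is_delta_matroid F -> is_normal F -> is_binary F ->
  intersection_graph_is_complete F ->
  twist_poly F =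
    (if odd v then (2 ^ v)%:Z *: 'X^(v.-1)
     else (2 ^ v.-1)%:Z *: 'X^v + (2 ^ v.-1)%:Z *: 'X^(v.-2)).
Proof.
move=> HE Hv _ _ _ [C [_ [HF HC]]].
have HF' : F = [set X : {set E} | ~~ odd #|X|].
  rewrite HF; apply/setP => A; rewrite /DC !inE -det_JI.
  have -> : principal_submx C A = JI #|A| by
    apply/matrixP => i j; rewrite !mxE HC /complete_adj_mx (inj_eq enum_val_inj).
  by [].
have Hw : forall A, width (twist F A) = (v - (odd v != odd #|A|) - odd #|A|)%N.
  by move=> A; rewrite HF' twist_even width_parity; rewrite HE.
rewrite /twist_poly.
under eq_bigr => A _ do rewrite Hw.
have Hcard : #|{set E}| = (2 ^ v)%N by rewrite -cardsT -powersetT card_powerset cardsT HE.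
case Hodd: (odd v).
- transitivity (\sum_(A : {set E}) ('X^(v.-1) : {poly int})).
    by apply: eq_bigr => A _; case: (odd #|A|); rewrite /= ?subn0 ?subn1.
  rewrite sumr_const (_ : #|xpredT| = #|{set E}|) // Hcard.
  by rewrite -scaler_nat natz.
rewrite (bigID (fun A : {set E} => odd #|A|)) /=.
have [Co Ce] := count_odd E (leq_trans Hv (eq_leq (esym HE))).
rewrite HE in Co Ce.
rewrite (eq_bigr (fun _ => 'X^(v.-2))); last first.
  by move=> A ->; rewrite /= !subn1.
rewrite [X in _ + X](eq_bigr (fun _ => 'X^v)); last first.
  by move=> A /negbTE ->; rewrite /= !subn0.
rewrite !sumr_const Co Ce -!scaler_nat !natz addrC.
by [].
Qed.
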